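(* For every $i\in\mathcal U$ and every $a\in L$: $\exists u\,T(i,a,u)$ holds if and only if the sequent $B\to\exists u\,T(i,a,u)$ is provable.
   Context: The theory $\mathbf B$: first-order theory with binary infix function symbol ''$.$'', predicates $T(i,a,u)$, $U(x,s,z,q,j,i,u)$, and single axiom $B$, the conjunction of the universal closures of: (1) $T(i,a,u)\supset U(\emptyset,\emptyset,a.\emptyset,1,i,i,u)$; (2) $U(\emptyset,\emptyset,a.\emptyset,1,i,i,u)\supset T(i,a,u)$; (3) $U(x,s,z,0,i,i,x)$; (4) $U(x,v,r.z,p,i,i,u)\supset U(x.v,s,z,q,\,q.s.p.r.0.j,\,i,u)$; (5) $U(x.r,v,z,p,i,i,u)\supset U(x,s,v.z,q,\,q.s.p.r.1.j,\,i,u)$; (6) $U(x,s,z,q,j,i,u)\supset U(x,s,z,q,\,q'.s'.p.r.d.j,\,i,u)$. $L$ is the set of right-tape lists (built from $\emptyset$ by $s.z$ with $s$ a tape symbol), $M\subset L$ the set of Turing machine codes (lists of quintuples $q.s.p.r.d$ with states $p,q$, symbols $r,s$, move $d\in\{0,1\}$); in the intended interpretation $T(i,a,u)$ means machine $i$ on input $a$ halts with output $u$. $\mathcal U$ is the set of deterministic Turing machine codes (no two quintuples with the same $q.s$ and different $p.r.d$) that on every input $F.\emptyset$, $F$ a propositional formula, halt with output $\emptyset.0$ if $F$ is satisfiable and $\emptyset.1$ if $F$ is unsatisfiable. *)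

(* Defs.v *)
From Stdlib Require Import List.
Import ListNotations.

Inductive gterm : Type :=
| emp  : gterm
| zero : gterm
| one  : gterm
| dot  : gterm -> gterm -> gterm.   (* s.z  (infix "." associates to the right) *)

Inductive term : Type :=
| var  : nat -> term
| temp : term
| tzero : term
| tone : term
| tdot : term -> term -> term.

Fixpoint emb (g : gterm) : term :=
  match g with
  | emp => temp | zero => tzero | one => tone
  | dot s t => tdot (emb s) (emb t)
  end.

Inductive form : Type :=
| fT   : term -> term -> term -> form
| fU   : term -> term -> term -> term -> term -> term -> term -> form
| fFal : form
| fImp : form -> form -> form
| fAnd : form -> form -> form
| fOr  : form -> form -> form
| fAll : form -> form
| fEx  : form -> form.

Fixpoint tsubst (sg : nat -> term) (t : term) : term :=
  match t with
  | var n => sg n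
  | temp => temp | tzero => tzero | tone => tone
  | tdot a b => tdot (tsubst sg a) (tsubst sg b)
  end.

Definition shift : nat -> term := fun n => var (S n).

Definition up (sg : nat -> term) : nat -> term :=
  fun n => match n with 0 => var 0 | S k => tsubst shift (sg k) end.

Fixpoint fsubst (sg : nat -> term) (f : form) : form :=
  match f with
  | fT a b c => fT (tsubst sg a) (tsubst sg b) (tsubst sg c)
  | fU a b c d e g h => fU (tsubst sg a) (tsubst sg b) (tsubst sg c) (tsubst sg d)
                           (tsubst sg e) (tsubst sg g) (tsubst sg h)
  | fFal => fFal
  | fImp p q => fImp (fsubst sg p) (fsubst sg q)
  | fAnd p q => fAnd (fsubst sg p) (fsubst sg q)
  | fOr p q => fOr (fsubst sg p) (fsubst sg q)
  | fAll p => fAll (fsubst (up sg) p)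
  | fEx p => fEx (fsubst (up sg) p)
  end.

Definition lift (f : form) : form := fsubst shift f.

Definition inst (t : term) : nat -> term :=
  fun n => match n with 0 => t | S k => var k end.

Inductive prv : list form -> form -> Prop :=
| pAx   G A   : In A G -> prv G A
| pImpI G A B : prv (A :: G) B -> prv G (fImp A B)
| pImpE G A B : prv G (fImp A B) -> prv G A -> prv G B
| pAndI G A B : prv G A -> prv G B -> prv G (fAnd A B)
| pAndE1 G A B : prv G (fAnd A B) -> prv G A
| pAndE2 G A B : prv G (fAnd A B) -> prv G B
| pOrI1 G A B : prv G A -> prv G (fOr A B)
| pOrI2 G A B : prv G B -> prv G (fOr A B)
| pOrE  G A B C : prv G (fOr A B) -> prv (A :: G) C -> prv (B :: G) C -> prv G C
| pFalE G A   : prv G fFal -> prv G A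
| pRAA  G A   : prv (fImp A fFal :: G) fFal -> prv G A
| pAllI G A   : prv (map lift G) A -> prv G (fAll A)
| pAllE G t A : prv G (fAll A) -> prv G (fsubst (inst t) A)
| pExI  G t A : prv G (fsubst (inst t) A) -> prv G (fEx A)
| pExE  G A B : prv G (fEx A) -> prv (A :: map lift G) (lift B) -> prv G B.

Fixpoint alls (n : nat) (f : form) : form :=
  match n with 0 => f | S k => fAll (alls k f) end.

Definition tquint (q s p r d j : term) : term :=
  tdot q (tdot s (tdot p (tdot r (tdot d j)))).

Definition v (n : nat) : term := var n.

(* (1) T(i,a,u) ⊃ U(∅,∅,a.∅,1,i,i,u)      with i,a,u = v0,v1,v2 *)
Definition ax1 : form :=
  alls 3 (fImp (fT (v 0) (v 1) (v 2))
               (fU temp temp (tdot (v 1) temp) tone (v 0) (v 0) (v 2))).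
(* (2) U(∅,∅,a.∅,1,i,i,u) ⊃ T(i,a,u) *)
Definition ax2 : form :=
  alls 3 (fImp (fU temp temp (tdot (v 1) temp) tone (v 0) (v 0) (v 2))
               (fT (v 0) (v 1) (v 2))).
(* (3) U(x,s,z,0,i,i,x)        x,s,z,i = v0..v3 *)
Definition ax3 : form :=
  alls 4 (fU (v 0) (v 1) (v 2) tzero (v 3) (v 3) (v 0)).
(* (4) U(x,v,r.z,p,i,i,u) ⊃ U(x.v,s,z,q,q.s.p.r.0.j,i,u)
       x,v,r,z,p,i,u,s,q,j = v0..v9 *)
Definition ax4 : form :=
  alls 10 (fImp (fU (v 0) (v 1) (tdot (v 2) (v 3)) (v 4) (v 5) (v 5) (v 6))
                (fU (tdot (v 0) (v 1)) (v 7) (v 3) (v 8)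
                    (tquint (v 8) (v 7) (v 4) (v 2) tzero (v 9)) (v 5) (v 6))).
(* (5) U(x.r,v,z,p,i,i,u) ⊃ U(x,s,v.z,q,q.s.p.r.1.j,i,u)
       x,r,v,z,p,i,u,s,q,j = v0..v9 *)
Definition ax5 : form :=
  alls 10 (fImp (fU (tdot (v 0) (v 1)) (v 2) (v 3) (v 4) (v 5) (v 5) (v 6))
                (fU (v 0) (v 7) (tdot (v 2) (v 3)) (v 8)
                    (tquint (v 8) (v 7) (v 4) (v 1) tone (v 9)) (v 5) (v 6))).
(* (6) U(x,s,z,q,j,i,u) ⊃ U(x,s,z,q,q'.s'.p.r.d.j,i,u)
       x,s,z,q,j,i,u,q',s',p,r,d = v0..v11 *)
Definition ax6 : form :=
  alls 12 (fImp (fU (v 0) (v 1) (v 2) (v 3) (v 4) (v 5) (v 6))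
                (fU (v 0) (v 1) (v 2) (v 3)
                    (tquint (v 7) (v 8) (v 9) (v 10) (v 11) (v 4)) (v 5) (v 6))).

Definition B : form :=
  fAnd ax1 (fAnd ax2 (fAnd ax3 (fAnd ax4 (fAnd ax5 ax6)))).

Definition exT (i a : gterm) : form := fEx (fT (emb i) (emb a) (var 0)).

Definition gquint (q s p r d j : gterm) : gterm :=
  dot q (dot s (dot p (dot r (dot d j)))).

Inductive quint_in : gterm -> gterm -> gterm -> gterm -> gterm -> gterm -> Prop :=
| qi_here q s p r d j : quint_in (gquint q s p r d j) q s p r d
| qi_later q' s' p' r' d' j q s p r d :
    quint_in j q s p r d -> quint_in (gquint q' s' p' r' d' j) q s p r d.

(* configurations: (left tape x, scanned symbol s, right tape z, state q);
   the left tape x.v has v as the cell adjacent to the head *)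
Record config := Cfg { cl : gterm; cs : gterm; cr : gterm; cq : gterm }.

Inductive step (i : gterm) : config -> config -> Prop :=
| step_left x v s r z q p :       (* quintuple q.s.p.r.0 : write r, move left *)
    quint_in i q s p r zero ->
    step i (Cfg (dot x v) s z q) (Cfg x v (dot r z) p)
| step_right x v s r z q p :      (* quintuple q.s.p.r.1 : write r, move right *)
    quint_in i q s p r one ->
    step i (Cfg x s (dot v z) q) (Cfg (dot x r) v z p).

Inductive reach (i : gterm) : config -> config -> Prop :=
| reach_refl c : reach i c c
| reach_step c1 c2 c3 : step i c1 c2 -> reach i c2 c3 -> reach i c1 c3.

Definition halts_with (i a u : gterm) : Prop :=
  exists s z, reach i (Cfg emp emp (dot a emp) one) (Cfg u s z zero).

(* right-tape lists; every ground term counts as a tape symbol *)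
Inductive inL : gterm -> Prop :=
| inL_nil : inL emp
| inL_cons s z : inL z -> inL (dot s z).

Inductive inM : gterm -> Prop :=
| inM_nil : inM emp
| inM_cons q s p r d j : (d = zero \/ d = one) -> inM j -> inM (gquint q s p r d j).

Definition deterministic (i : gterm) : Prop :=
  forall q s p r d p' r' d',
    quint_in i q s p r d -> quint_in i q s p' r' d' -> p = p' /\ r = r' /\ d = d'.

Inductive pform : Type :=
| PVar : nat -> pform
| PNot : pform -> pform
| PAnd : pform -> pform -> pform
| POr  : pform -> pform -> pform
| PImp : pform -> pform -> pform.

Fixpoint peval (val : nat -> bool) (F : pform) : bool :=
  match F with
  | PVar n => val n
  | PNot G => negb (peval val G)
  | PAnd G H => andb (peval val G) (peval val H)
  | POr G H => orb (peval val G) (peval val H)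
  | PImp G H => orb (negb (peval val G)) (peval val H)
  end.

Definition satisfiable (F : pform) : Prop := exists val, peval val F = true.

(* 𝒰, relative to an encoding [enc] of propositional formulas as tape symbols *)
Definition inUU (enc : pform -> gterm) (i : gterm) : Prop :=
  inM i /\ deterministic i /\
  forall F : pform,
    (satisfiable F -> halts_with i (dot (enc F) emp) (dot emp zero)) /\
    (~ satisfiable F -> halts_with i (dot (enc F) emp) (dot emp one)).

(* Main.v *)
Require Import Defs.
From Stdlib Require Import List Classical.
Import ListNotations.

Definition scons (x : gterm) (rho : nat -> gterm) (n : nat) : gterm :=
  match n with 0 => x | S k => rho k end.

Fixpoint teval (rho : nat -> gterm) (t : term) : gterm :=
  match t with
  | var n => rho n | temp => emp | tzero => zero | tone => one
  | tdot a b => dot (teval rho a) (teval rho b)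
  end.

Inductive suf : gterm -> gterm -> Prop :=
| suf_refl i : suf i i
| suf_cons q s p r d j i : suf (gquint q s p r d j) i -> suf j i.

Definition Usem x s z q j i u : Prop :=
  suf j i -> exists s' z', reach i (Cfg x s z q) (Cfg u s' z' zero).

Fixpoint sat (rho : nat -> gterm) (f : form) : Prop :=
  match f with
  | fT a b c => halts_with (teval rho a) (teval rho b) (teval rho c)
  | fU a b c d e g h => Usem (teval rho a) (teval rho b) (teval rho c) (teval rho d)
                          (teval rho e) (teval rho g) (teval rho h)
  | fFal => False
  | fImp p q => sat rho p -> sat rho q
  | fAnd p q => sat rho p /\ sat rho q
  | fOr p q => sat rho p \/ sat rho q
  | fAll p => forall x, sat (scons x rho) p
  | fEx p => exists x, sat (scons x rho) p
  end.

Lemma teval_ext rho rho' t : (forall n, rho n = rho' n) -> teval rho t = teval rho' t.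
Proof. intros H; induction t; simpl; congruence. Qed.

Lemma teval_subst rho sg t : teval rho (tsubst sg t) = teval (fun n => teval rho (sg n)) t.
Proof. induction t; simpl; congruence. Qed.

Lemma sat_ext A : forall rho rho', (forall n, rho n = rho' n) -> (sat rho A <-> sat rho' A).
Proof.
  induction A; intros rho rho' H; simpl;
  repeat match goal with |- context [teval rho ?t] => rewrite (teval_ext rho rho' t H) end;
  try tauto.
  - rewrite (IHA1 rho rho' H), (IHA2 rho rho' H); tauto.
  - rewrite (IHA1 rho rho' H), (IHA2 rho rho' H); tauto.
  - rewrite (IHA1 rho rho' H), (IHA2 rho rho' H); tauto.
  - split; intros H1 x; apply (IHA (scons x rho) (scons x rho')); try apply H1;
    intros [|n]; simpl; auto.
  - split; intros [x H1]; exists x; apply (IHA (scons x rho) (scons x rho')) ; auto;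
    intros [|n]; simpl; auto.
Qed.

Lemma sat_subst A : forall rho sg, sat rho (fsubst sg A) <-> sat (fun n => teval rho (sg n)) A.
Proof.
  induction A; intros rho sg; simpl; rewrite ?teval_subst; try tauto.
  - rewrite IHA1, IHA2; tauto.
  - rewrite IHA1, IHA2; tauto.
  - rewrite IHA1, IHA2; tauto.
  - split; intros H1 x; specialize (H1 x); rewrite IHA in *;
    (eapply sat_ext; [|exact H1]); intros [|n]; simpl; auto;
    rewrite teval_subst; apply teval_ext; reflexivity.
  - split; intros [x H1]; exists x; rewrite IHA in *;
    (eapply sat_ext; [|exact H1]); intros [|n]; simpl; auto;
    rewrite teval_subst; apply teval_ext; reflexivity.
Qed.

Lemma sat_lift x rho A : sat (scons x rho) (lift A) <-> sat rho A.
Proof. unfold lift; rewrite sat_subst; apply sat_ext; reflexivity. Qed.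

Lemma sat_inst rho t A : sat rho (fsubst (inst t) A) <-> sat (scons (teval rho t) rho) A.
Proof. rewrite sat_subst; apply sat_ext; intros [|n]; reflexivity. Qed.

Lemma soundness G A : prv G A -> forall rho, (forall C, In C G -> sat rho C) -> sat rho A.
Proof.
  induction 1; intros rho HG; simpl in *.
  - auto.
  - intros HA; apply IHprv; intros C [<-|HC]; auto.
  - apply IHprv1; auto.
  - split; auto.
  - apply (IHprv rho HG).
  - apply (IHprv rho HG).
  - left; auto.
  - right; auto.
  - destruct (IHprv1 rho HG) as [HA|HB].
    + apply IHprv2; intros C0 [<-|HC]; auto.
    + apply IHprv3; intros C0 [<-|HC]; auto.
  - destruct (IHprv rho HG).
  - apply NNPP; intros HA; apply (IHprv rho); intros C [<-|HC]; simpl; auto.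
  - intros x; apply IHprv; intros C HC; apply in_map_iff in HC as [C' [<- HC']];
    apply sat_lift; auto.
  - apply sat_inst; apply (IHprv rho HG).
  - exists (teval rho t); apply sat_inst; auto.
  - destruct (IHprv1 rho HG) as [x Hx].
    apply (sat_lift x rho); apply IHprv2; intros C [<-|HC]; auto.
    apply in_map_iff in HC as [C' [<- HC']]; apply sat_lift; auto.
Qed.

Lemma suf_quint j i q s p r d : suf (gquint q s p r d j) i -> quint_in i q s p r d.
Proof.
  intros H. remember (gquint q s p r d j) as k.
  assert (Hk : quint_in k q s p r d) by (subst; constructor). clear Heqk.
  induction H; auto. apply IHsuf. constructor; auto.
Qed.

Lemma B_true rho : sat rho B.
Proof.
  unfold B, ax1, ax2, ax3, ax4, ax5, ax6; simpl; unfold Usem.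
  repeat split.
  - intros u a i [s [z H]] _. eauto.
  - intros u a i H. destruct (H (suf_refl _)) as [s [z H']]. exists s, z; auto.
  - intros i z s x _. exists s, z. constructor.
  - intros j q s u i p z r v0 x H Hs.
    destruct (H (suf_refl _)) as [s' [z' H']]. exists s', z'.
    econstructor; [|exact H']. constructor. eapply suf_quint; eauto.
  - intros j q s u i p z v0 r x H Hs.
    destruct (H (suf_refl _)) as [s' [z' H']]. exists s', z'.
    econstructor; [|exact H']. constructor. eapply suf_quint; eauto.
  - intros d r p s' q' u i j q z s x H Hs. apply H. eapply suf_cons; eauto.
Qed.

Lemma teval_emb rho g : teval rho (emb g) = g.
Proof. induction g; simpl; congruence. Qed.

Lemma emb_tsubst sg g : tsubst sg (emb g) = emb g.
Proof. induction g; simpl; congruence. Qed.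

Lemma getB (n : nat) : prv [B] B.
Proof. apply pAx; left; reflexivity. Qed.

Lemma pax1 : prv [B] ax1. Proof. apply (pAndE1 _ _ _ (getB 0)). Qed.
Lemma pax2 : prv [B] ax2. Proof. apply (pAndE1 _ _ _ (pAndE2 _ _ _ (getB 0))). Qed.
Lemma pax3 : prv [B] ax3.
Proof. apply (pAndE1 _ _ _ (pAndE2 _ _ _ (pAndE2 _ _ _ (getB 0)))). Qed.
Lemma pax4 : prv [B] ax4.
Proof. apply (pAndE1 _ _ _ (pAndE2 _ _ _ (pAndE2 _ _ _ (pAndE2 _ _ _ (getB 0))))). Qed.
Lemma pax5 : prv [B] ax5.
Proof. apply (pAndE1 _ _ _ (pAndE2 _ _ _ (pAndE2 _ _ _ (pAndE2 _ _ _ (pAndE2 _ _ _ (getB 0)))))). Qed.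
Lemma pax6 : prv [B] ax6.
Proof. apply (pAndE2 _ _ _ (pAndE2 _ _ _ (pAndE2 _ _ _ (pAndE2 _ _ _ (pAndE2 _ _ _ (getB 0)))))). Qed.

Ltac inst H g := apply (pAllE _ (emb g)) in H; simpl in H; rewrite ?emb_tsubst in H.

Definition Uf x s z q j i u :=
  fU (emb x) (emb s) (emb z) (emb q) (emb j) (emb i) (emb u).

Lemma ax3_use x s z i : prv [B] (Uf x s z zero i i x).
Proof.
  pose proof pax3 as H; unfold ax3, alls in H.
  inst H i; inst H z; inst H s; inst H x. exact H.
Qed.

Lemma ax6_use x s z q j i u q' s' p r d :
  prv [B] (Uf x s z q j i u) -> prv [B] (Uf x s z q (gquint q' s' p r d j) i u).
Proof.
  intros H0. pose proof pax6 as H; unfold ax6, alls in H.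
  inst H d; inst H r; inst H p; inst H s'; inst H q'; inst H u; inst H i;
  inst H j; inst H q; inst H z; inst H s; inst H x.
  exact (pImpE _ _ _ H H0).
Qed.

Lemma ax4_use x v0 r z p i u s q j :
  prv [B] (Uf x v0 (dot r z) p i i u) -> prv [B] (Uf (dot x v0) s z q (gquint q s p r zero j) i u).
Proof.
  intros H0. pose proof pax4 as H; unfold ax4, alls in H.
  inst H j; inst H q; inst H s; inst H u; inst H i; inst H p; inst H z;
  inst H r; inst H v0; inst H x.
  exact (pImpE _ _ _ H H0).
Qed.

Lemma ax5_use x r v0 z p i u s q j :
  prv [B] (Uf (dot x r) v0 z p i i u) -> prv [B] (Uf x s (dot v0 z) q (gquint q s p r one j) i u).
Proof.
  intros H0. pose proof pax5 as H; unfold ax5, alls in H.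
  inst H j; inst H q; inst H s; inst H u; inst H i; inst H p; inst H z;
  inst H v0; inst H r; inst H x.
  exact (pImpE _ _ _ H H0).
Qed.


Lemma left_lift i u q s p r x v0 z k :
  quint_in k q s p r zero -> prv [B] (Uf x v0 (dot r z) p i i u) ->
  prv [B] (Uf (dot x v0) s z q k i u).
Proof.
  intros Hq; remember zero as d0; induction Hq; intros H0; subst.
  - apply ax4_use; auto.
  - apply ax6_use; auto.
Qed.

Lemma right_lift i u q s p r x v0 z k :
  quint_in k q s p r one -> prv [B] (Uf (dot x r) v0 z p i i u) ->
  prv [B] (Uf x s (dot v0 z) q k i u).
Proof.
  intros Hq; remember one as d0; induction Hq; intros H0; subst.
  - apply ax5_use; auto.
  - apply ax6_use; auto.
Qed.

Lemma reach_prv i c c' : reach i c c' -> forall u s z, c' = Cfg u s z zero ->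
  prv [B] (Uf (cl c) (cs c) (cr c) (cq c) i i u).
Proof.
  induction 1; intros u s z E.
  - subst; simpl; apply ax3_use.
  - specialize (IHreach u s z E). destruct H; simpl in *.
    + apply left_lift with (p := p) (r := r); auto.
    + apply right_lift with (p := p) (r := r); auto.
Qed.

Theorem corollary3 :
  forall (enc : pform -> gterm) (i a : gterm),
    inUU enc i -> inL a ->
    ((exists u, halts_with i a u) <-> prv [B] (exT i a)).
Proof.
  intros enc i a _ _; split.
  - intros [u [s [z H]]].
    pose proof (reach_prv _ _ _ H u s z eq_refl) as HU; simpl in HU.
    pose proof pax2 as H2; unfold ax2, alls in H2.
    inst H2 u; inst H2 a; inst H2 i.
    apply (pExI _ (emb u)). simpl; rewrite ?emb_tsubst.
    exact (pImpE _ _ _ H2 HU).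
  - intros H. pose proof (soundness _ _ H (fun _ => emp)) as S.
    simpl in S. destruct S as [u Hu].
    + intros C [<-|[]]; apply B_true.
    + rewrite !teval_emb in Hu. simpl in Hu. exists u; exact Hu.
Qed.
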